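(* Consider a feasible solution of a division and assignment problem $(T; \{U_1,\dots,U_p\}, V)$ in which $V$ has $v$ columns, together with a value-preserving bijection between the entry positions of $T$ and the entry positions of $U_1,\dots,U_p,V$. If $(A,B)$ is an inseparable $(T,V)$-pair with $a = |A|$ and $b = |B|$, then $a \le (v-1)b + 1$.
   Context: A division and assignment problem $(T;\{U_1,\dots,U_p\},V)$ consists of matrices $T$ (supply matrix) and $U_1,\dots,U_p,V$ (demand matrices), each with prescribed dimensions and prescribed common row sum per matrix; a feasible solution fills all matrices with real numbers so that all row sums are met and the multiset of entries of $T$ equals the multiset union of the entries of $U_1,\dots,U_p,V$. Fix such a solution together with a bijection $\phi$ from the entry positions of $U_1,\dots,U_p,V$ onto the entry positions of $T$ preserving values; an entry of $V$ is said to lie in the row of $T$ containing its image under $\phi$. A $(T,V)$-pair is a pair $(A,B)$ where $A$ is a set of rows of $T$ and $B$ is a set of rows of $V$ such that every entry of every row in $B$ lies in a row of $A$, and every row of $A$ contains at least one entry of a row of $B$. A $(T,V)$-pair $(A,B)$ is inseparable if there do not exist $(T,V)$-pairs $(A_1,B_1)$ and $(A_2,B_2)$ with $A_1\cap A_2=\emptyset$, $A_1\cup A_2=A$, $B_1\cap B_2=\emptyset$, $B_1\cup B_2 = B$. *)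

(* Defs.v *)
From mathcomp Require Import all_boot all_order all_algebra.
Set Implicit Arguments. Unset Strict Implicit. Unset Printing Implicit Defensive.
Import GRing.Theory Num.Theory.
Local Open Scope ring_scope.

(* Entry positions of the demand matrices U_1..U_p (U_k of size mU k x nU k)
   and V (size mV x v): a position is either (k, (i, j)) in some U_k,
   or (i, j) in V. *)
Definition demand_pos (p : nat) (mU nU : 'I_p -> nat) (mV v : nat) : finType :=
  ({k : 'I_p & ('I_(mU k) * 'I_(nU k))%type} + ('I_mV * 'I_v))%type.

Definition demand_val (R : Type) (p : nat) (mU nU : 'I_p -> nat) (mV v : nat)
  (U : forall k : 'I_p, 'M[R]_(mU k, nU k)) (V : 'M[R]_(mV, v))
  (d : demand_pos mU nU mV v) : R :=
  match d with
  | inl s => U (tag s) (tagged s).1 (tagged s).2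
  | inr ij => V ij.1 ij.2
  end.

Definition Vrow_in_T (p : nat) (mU nU : 'I_p -> nat) (mV v mT nT : nat)
  (phi : demand_pos mU nU mV v -> ('I_mT * 'I_nT)%type)
  (r : 'I_mV) (c : 'I_v) : 'I_mT :=
  (phi (inr (r, c))).1.

Definition TVpair (p : nat) (mU nU : 'I_p -> nat) (mV v mT nT : nat)
  (phi : demand_pos mU nU mV v -> ('I_mT * 'I_nT)%type)
  (A : {set 'I_mT}) (B : {set 'I_mV}) : Prop :=
  (forall r, r \in B -> forall c : 'I_v, Vrow_in_T phi r c \in A) /\
  (forall a, a \in A -> exists r, exists c : 'I_v, r \in B /\ Vrow_in_T phi r c = a).

Definition inseparable (p : nat) (mU nU : 'I_p -> nat) (mV v mT nT : nat)
  (phi : demand_pos mU nU mV v -> ('I_mT * 'I_nT)%type)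
  (A : {set 'I_mT}) (B : {set 'I_mV}) : Prop :=
  ~ exists (A1 A2 : {set 'I_mT}) (B1 B2 : {set 'I_mV}),
      [/\ TVpair phi A1 B1, TVpair phi A2 B2,
          (A1 != set0) || (B1 != set0), (A2 != set0) || (B2 != set0) &
          [/\ A1 :&: A2 = set0, A1 :|: A2 = A, B1 :&: B2 = set0 & B1 :|: B2 = B]].

Definition feasible (R : ringType) (p : nat) (mU nU : 'I_p -> nat) (mV v mT nT : nat)
  (T : 'M[R]_(mT, nT)) (t : R)
  (U : forall k : 'I_p, 'M[R]_(mU k, nU k)) (u : 'I_p -> R)
  (V : 'M[R]_(mV, v)) (sv : R) : Prop :=
  (forall i, \sum_j T i j = t) /\
  (forall k i, \sum_j U k i j = u k) /\
  (forall i, \sum_j V i j = sv).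

(* Main.v *)
Require Import Defs.
From mathcomp Require Import all_boot all_order all_algebra.
From mathcomp Require Import zify.

Section Aux.
Variables (p : nat) (mU nU : 'I_p -> nat) (mV v mT nT : nat)
  (phi : demand_pos mU nU mV v -> ('I_mT * 'I_nT)%type).
Local Notation f := (Vrow_in_T phi).

Definition NS (S : {set 'I_mV}) : {set 'I_mT} :=
  [set a | [exists r in S, exists c, f r c == a]].

Lemma NS_pair S : TVpair phi (NS S) S.
Proof.
split.
  move=> r rS c; rewrite inE; apply/existsP; exists r; rewrite rS /=.
  by apply/existsP; exists c.
move=> a; rewrite inE => /existsP [r /andP [rS /existsP [c /eqP e]]].
by exists r, c.
Qed.

Lemma NS_pairA {A B} : TVpair phi A B -> NS B = A.
Proof.
case=> h1 h2; apply/setP=> a; rewrite inE; apply/idP/idP.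
  move=> /existsP [r /andP [rS /existsP [c /eqP <-]]]; exact: h1.
move/h2=> [r [c [rB e]]]; apply/existsP; exists r; rewrite rB /=.
by apply/existsP; exists c; rewrite e.
Qed.

Lemma NSU S1 S2 : NS (S1 :|: S2) = NS S1 :|: NS S2.
Proof.
apply/setP=> a; rewrite !inE; apply/idP/idP.
  move=> /existsP [x /andP [xS H]]; rewrite !inE in xS.
  case/orP: xS => xS; apply/orP; [left|right]; apply/existsP; exists x;
    by rewrite xS.
case/orP => /existsP [x /andP [xS H]]; apply/existsP; exists x;
  by rewrite !inE xS ?orbT.
Qed.

Lemma NS1 r : (#|NS [set r]| <= v)%N.
Proof.
have -> : NS [set r] = (fun c => f r c) @: [set: 'I_v].
  apply/setP=> a; rewrite inE; apply/existsP/imsetP.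
    by move=> [x /andP [/set1P -> /existsP [c /eqP <-]]]; exists c.
  move=> [c _ ->]; exists r; rewrite set11 /=; apply/existsP; by exists c.
by apply: leq_trans (leq_imset_card _ _) _; rewrite cardsT card_ord.
Qed.

Lemma grow {A B} : TVpair phi A B -> inseparable phi A B ->
  forall k, (k < #|B|)%N -> exists S : {set 'I_mV}, [/\ S \subset B, #|S| = k.+1 &
     (#|NS S| + #|S| <= v * #|S| + 1)%N].
Proof.
move=> Hpair Hins; elim=> [|k IH] hk.
  have [r rB] : exists r, r \in B.
    have : B != set0 by rewrite -card_gt0.
    by case/set0Pn=> r rB; exists r.
  exists [set r]; split; first by rewrite sub1set.
    by rewrite cards1.
  rewrite cards1; have := NS1 r; lia.
have [S [hSB hcard hle]] := IH (ltnW hk).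
case: (boolP [exists r, [&& r \in B, r \notin S & NS [set r] :&: NS S != set0]]).
  move=> /existsP [r /and3P [rB rS hI]].
  exists (r |: S); split.
  - by rewrite subUset sub1set rB hSB.
  - by rewrite cardsU1 rS hcard.
  rewrite NSU cardsU1 rS hcard.
  have := cardsUI (NS [set r]) (NS S).
  have := NS1 r.
  have : (0 < #|NS [set r] :&: NS S|)%N by rewrite card_gt0.
  rewrite hcard !mulnS in hle; rewrite !mulnS; lia.
move/existsPn=> Hn; exfalso; apply: Hins.
have setDUK : S :|: B :\: S = B.
  apply/setP=> x; rewrite !inE; case: (boolP (x \in S)) => //= xS.
  by rewrite (subsetP hSB).
exists (NS S), (NS (B :\: S)), S, (B :\: S); split; last split.
- exact: NS_pair.
- exact: NS_pair.
- by apply/orP; right; rewrite -card_gt0 hcard.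
- apply/orP; right; rewrite -card_gt0 cardsD (setIidPr hSB) hcard; lia.
- apply/setP=> a; rewrite in_set0 in_setI; apply/negbTE/andP=> [[h1 h2]].
  move: h2; rewrite inE => /existsP [x /andP [xBS /existsP [c /eqP e]]].
  move: xBS; rewrite inE => /andP [xS xB].
  have := Hn x; rewrite xB xS /= => /negP; apply; apply/set0Pn; exists a.
  rewrite inE h1 andbT inE; apply/existsP; exists x; rewrite set11 /=.
  by apply/existsP; exists c; rewrite e.
- by rewrite -NSU setDUK (NS_pairA Hpair).
- apply/setP=> x; rewrite !inE; by case: (x \in S); rewrite ?andbF.
- by rewrite setDUK.
Qed.

End Aux.
Arguments NS_pairA {p mU nU mV v mT nT phi A B}.
Arguments grow {p mU nU mV v mT nT phi A B}.

Theorem lemma3 (R : realFieldType)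
  (mT nT : nat) (T : 'M[R]_(mT, nT)) (t : R)
  (p : nat) (mU nU : 'I_p -> nat) (U : forall k : 'I_p, 'M[R]_(mU k, nU k))
  (u : 'I_p -> R)
  (mV v : nat) (V : 'M[R]_(mV, v)) (sv : R)
  (Hfeas : feasible T t U u V sv)
  (phi : demand_pos mU nU mV v -> ('I_mT * 'I_nT)%type)
  (Hbij : bijective phi)
  (Hval : forall d, demand_val U V d = T (phi d).1 (phi d).2)
  (A : {set 'I_mT}) (B : {set 'I_mV})
  (Hpair : TVpair phi A B) (Hins : inseparable phi A B) :
  (#|A| <= (v - 1) * #|B| + 1)%N.
Proof.
case: (posnP #|B|) => hB.
  have := NS_pairA Hpair; move/eqP: hB; rewrite cards_eq0 => /eqP ->.
  move=> <-. idtac.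
  suff -> : @NS p mU nU mV v mT nT phi set0 = set0 by rewrite !cards0.
  idtac.
  apply/setP=> a; rewrite !inE; apply/existsP=> [[r /andP [] ]].
  by rewrite inE.
have hlt : (#|B|.-1 < #|B|)%N by rewrite ltn_predL.
have [S [hSB hc hle]] := grow Hpair Hins _ hlt.
have eSB : S = B.
  apply/eqP; rewrite eqEcard hSB hc /=; lia.
rewrite eSB (NS_pairA Hpair) in hle.
rewrite mulnBl mul1n; lia.
Qed.
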